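(* Let $L\subseteq Q$ be a dense extension of Lie algebras such that $Q$ is a multiplicatively semiprime algebra of quotients of $L$. Then for every essential ideal $I$ of $L$, $\mathrm{l.ann}_{A(Q)}(\widetilde I)=0$.
   Context: Lie algebras over a commutative unital ring $\Phi$. $\mathrm{ad}_x(y)=[x,y]$; $A(Q)$ is the associative subalgebra of $\mathrm{End}_\Phi(Q)$ generated by all $\mathrm{ad}_x$, $x\in Q$, and $M(Q)$ is the one generated by the identity and all $\mathrm{ad}_x$. $A_Q(L)$ is the subalgebra of $A(Q)$ generated by $\{\mathrm{ad}_x:x\in L\}$, and for an ideal $I$ of $L$, $\widetilde I$ is the two-sided ideal of $A_Q(L)$ generated by $\{\mathrm{ad}_x:x\in I\}$. $\mathrm{l.ann}_B(X)=\{b\in B:bX=0\}$. An extension $L\subseteq Q$ is dense if the only $\mu\in M(Q)$ with $\mu(L)=0$ is $\mu=0$. A Lie algebra is semiprime if $[I,I]\neq0$ for every nonzero ideal $I$; $Q$ is multiplicatively semiprime if $Q$ and $M(Q)$ are semiprime. An ideal is essential if it meets every nonzero ideal nontrivially. $Q$ is an algebra of quotients of $L$ if for every nonzero $q\in Q$ there is an ideal $J$ of $L$ with $\mathrm{Ann}_L(J)=\{a\in L:[a,J]=0\}=0$ and $0\ne[J,q]\subseteq L$. *)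

(* Defs.v *)
From HB Require Import structures.
From mathcomp Require Import all_boot all_order all_algebra.
Set Implicit Arguments. Unset Strict Implicit. Unset Printing Implicit Defensive.
Import GRing.Theory.
Local Open Scope ring_scope.

Section LieDefs.
Variables (Phi : comPzRingType) (Q : lmodType Phi) (br : Q -> Q -> Q).

Definition is_lie_bracket : Prop :=
  [/\ (forall (a : Phi) x y z, br (a *: x + y) z = a *: br x z + br y z),
      (forall (a : Phi) x y z, br z (a *: x + y) = a *: br z x + br z y),
      (forall x, br x x = 0) &
      (forall x y z, br x (br y z) + br y (br z x) + br z (br x y) = 0)].

Definition is_submodule (S : Q -> Prop) : Prop :=
  [/\ S 0, (forall x y, S x -> S y -> S (x + y)) &
      (forall (a : Phi) x, S x -> S (a *: x))].

Definition is_lie_subalgebra (L : Q -> Prop) : Prop :=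
  is_submodule L /\ (forall x y, L x -> L y -> L (br x y)).

Definition is_lie_ideal (L I : Q -> Prop) : Prop :=
  [/\ forall x, I x -> L x, is_submodule I &
      (forall x y, L x -> I y -> I (br x y))].

Definition nonzero_set (S : Q -> Prop) : Prop := exists x, S x /\ x <> 0.

Definition ad (x : Q) : Q -> Q := fun y => br x y.

(* Subalgebra of End(Q) generated by a set S of endomorphisms
   (non-unital; extensionally closed). *)
Inductive gen_alg (S : (Q -> Q) -> Prop) : (Q -> Q) -> Prop :=
  | ga_gen f : S f -> gen_alg S f
  | ga_zero : gen_alg S (fun _ => 0)
  | ga_add f g : gen_alg S f -> gen_alg S g -> gen_alg S (fun q => f q + g q)
  | ga_scale (a : Phi) f : gen_alg S f -> gen_alg S (fun q => a *: f q)
  | ga_comp f g : gen_alg S f -> gen_alg S g -> gen_alg S (fun q => f (g q))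
  | ga_ext f g : gen_alg S f -> (forall q, f q = g q) -> gen_alg S g.

Definition A_alg : (Q -> Q) -> Prop := gen_alg (fun f => exists x, f = ad x).
Definition M_alg : (Q -> Q) -> Prop :=
  gen_alg (fun f => f = id \/ exists x, f = ad x).
Definition A_QL (L : Q -> Prop) : (Q -> Q) -> Prop :=
  gen_alg (fun f => exists2 x, L x & f = ad x).

Inductive gen_ideal (A S : (Q -> Q) -> Prop) : (Q -> Q) -> Prop :=
  | gi_gen f : S f -> gen_ideal A S f
  | gi_zero : gen_ideal A S (fun _ => 0)
  | gi_add f g : gen_ideal A S f -> gen_ideal A S g ->
                 gen_ideal A S (fun q => f q + g q)
  | gi_scale (a : Phi) f : gen_ideal A S f -> gen_ideal A S (fun q => a *: f q)
  | gi_lmul a f : A a -> gen_ideal A S f -> gen_ideal A S (fun q => a (f q))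
  | gi_rmul f a : gen_ideal A S f -> A a -> gen_ideal A S (fun q => f (a q))
  | gi_ext f g : gen_ideal A S f -> (forall q, f q = g q) -> gen_ideal A S g.

Definition tilde (L I : Q -> Prop) : (Q -> Q) -> Prop :=
  gen_ideal (A_QL L) (fun f => exists2 x, I x & f = ad x).

Definition l_ann (B X : (Q -> Q) -> Prop) : (Q -> Q) -> Prop :=
  fun b => B b /\ (forall t, X t -> forall q, b (t q) = 0).

Definition is_zero_map (f : Q -> Q) : Prop := forall q, f q = 0.

Definition dense_ext (L : Q -> Prop) : Prop :=
  forall mu, M_alg mu -> (forall x, L x -> mu x = 0) -> is_zero_map mu.

Definition lie_semiprime : Prop :=
  forall I, is_lie_ideal (fun _ => True) I -> nonzero_set I ->
    exists x y, [/\ I x, I y & br x y <> 0].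

Definition is_assoc_ideal (A J : (Q -> Q) -> Prop) : Prop :=
  [/\ forall f, J f -> A f,
      J (fun _ => 0),
      (forall f g, J f -> J g -> J (fun q => f q + g q)),
      (forall (a : Phi) f, J f -> J (fun q => a *: f q)) &
      (forall a f, A a -> J f -> J (fun q => a (f q)) /\ J (fun q => f (a q)))].

Definition assoc_semiprime (A : (Q -> Q) -> Prop) : Prop :=
  forall J, is_assoc_ideal A J -> (exists f, J f /\ ~ is_zero_map f) ->
    exists f g, [/\ J f, J g & ~ is_zero_map (fun q => f (g q))].

Definition mult_semiprime : Prop := lie_semiprime /\ assoc_semiprime M_alg.

Definition essential_ideal (L I : Q -> Prop) : Prop :=
  is_lie_ideal L I /\
  forall J, is_lie_ideal L J -> nonzero_set J ->
    exists x, [/\ I x, J x & x <> 0].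

Definition Ann_L (L J : Q -> Prop) : Q -> Prop :=
  fun a => L a /\ forall j, J j -> br a j = 0.

Definition algebra_of_quotients (L : Q -> Prop) : Prop :=
  forall q, q <> 0 -> exists J, [/\ is_lie_ideal L J,
    (forall a, Ann_L L J a -> a = 0),
    (exists j, J j /\ br j q <> 0) &
    (forall j, J j -> L (br j q))].

End LieDefs.

(* Main.v *)
Require Import Defs.
From HB Require Import structures.
From mathcomp Require Import all_boot all_order all_algebra.
Set Implicit Arguments. Unset Strict Implicit. Unset Printing Implicit Defensive.
Import GRing.Theory.
Local Open Scope ring_scope.

Definition linm (Phi : comPzRingType) (Q : lmodType Phi) (f : Q -> Q) :=
  forall (a : Phi) x y, f (a *: x + y) = a *: f x + f y.

Lemma linm0 (Phi : comPzRingType) (Q : lmodType Phi) (f : Q -> Q) :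
  linm f -> f 0 = 0.
Proof.
move=> h; have e := h 1 0 0; rewrite scaler0 addr0 scale1r in e.
by apply: (addrI (f 0)); rewrite addr0 -e.
Qed.

Lemma linmD (Phi : comPzRingType) (Q : lmodType Phi) (f : Q -> Q) :
  linm f -> forall x y, f (x + y) = f x + f y.
Proof. by move=> h x y; have := h 1 x y; rewrite !scale1r. Qed.

Lemma linmZ (Phi : comPzRingType) (Q : lmodType Phi) (f : Q -> Q) :
  linm f -> forall a x, f (a *: x) = a *: f x.
Proof. by move=> h a x; have := h a x 0; rewrite (linm0 h) !addr0. Qed.

Lemma linmN (Phi : comPzRingType) (Q : lmodType Phi) (f : Q -> Q) :
  linm f -> forall x, f (- x) = - f x.
Proof. by move=> h x; rewrite -scaleN1r linmZ // scaleN1r. Qed.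

Lemma ad_lin (Phi : comPzRingType) (Q : lmodType Phi) (br : Q -> Q -> Q) z :
  is_lie_bracket br -> linm (ad br z).
Proof. by case=> _ hr _ _ a x y; rewrite /ad hr. Qed.

Lemma br_anti (Phi : comPzRingType) (Q : lmodType Phi) (br : Q -> Q -> Q) :
  is_lie_bracket br -> forall x y, br x y = - br y x.
Proof.
move=> hb; have [hl hr ha _] := hb.
have lD : forall x y z, br (x + y) z = br x z + br y z.
  by move=> x y z; have := hl 1 x y z; rewrite !scale1r.
have rD : forall x y z, br z (x + y) = br z x + br z y.
  by move=> x y z; have := hr 1 x y z; rewrite !scale1r.
move=> x y; have := ha (x + y); rewrite lD !rD !ha add0r addr0 => /eqP.
by rewrite addr_eq0 => /eqP.
Qed.

Lemma M_lin (Phi : comPzRingType) (Q : lmodType Phi) (br : Q -> Q -> Q) f :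
  is_lie_bracket br -> M_alg br f -> linm f.
Proof.
move=> hb; elim=> [g [->|[x ->]] | | g h _ hg _ hh | c g _ hg | g h _ hg _ hh
  | g h _ hg e].
- by [].
- exact: ad_lin.
- by move=> a x y; rewrite scaler0 addr0.
- by move=> a x y; rewrite hg hh scalerDr addrACA.
- by move=> a x y; rewrite hg scalerDr !scalerA mulrC.
- by move=> a x y; rewrite hh hg.
- by move=> a x y; rewrite -!e hg.
Qed.

Lemma A_sub_M (Phi : comPzRingType) (Q : lmodType Phi) (br : Q -> Q -> Q) f :
  A_alg br f -> M_alg br f.
Proof.
elim=> [g [x ->] | | g h _ hg _ hh | c g _ hg | g h _ hg _ hh | g h _ hg e].
- by apply: ga_gen; right; exists x.
- exact: ga_zero.
- exact: ga_add.
- exact: ga_scale.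
- exact: ga_comp.
- exact: ga_ext e.
Qed.

Lemma M_id (Phi : comPzRingType) (Q : lmodType Phi) (br : Q -> Q -> Q) :
  M_alg br id.
Proof. by apply: ga_gen; left. Qed.

Lemma M_ad (Phi : comPzRingType) (Q : lmodType Phi) (br : Q -> Q -> Q) x :
  M_alg br (ad br x).
Proof. by apply: ga_gen; right; exists x. Qed.

Lemma sp_zero (Phi : comPzRingType) (Q : lmodType Phi) (br : Q -> Q -> Q) f :
  is_lie_bracket br -> assoc_semiprime (M_alg br) -> M_alg br f ->
  (forall m, M_alg br m -> forall q, f (m (f q)) = 0) -> is_zero_map f.
Proof.
move=> hb sp Mf hf.

have GM : forall g, gen_ideal (M_alg br) (fun g => g = f) g -> M_alg br g.
  move=> ?; elim=> [g -> | | g h _ hg _ hh | c g _ hg | a g Ma _ hg | g a _ hg Ma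
    | g h _ hg e] //.
  - exact: ga_zero.
  - exact: ga_add.
  - exact: ga_scale.
  - exact: ga_comp.
  - exact: ga_comp.
  - exact: ga_ext e.
have T : forall g, gen_ideal (M_alg br) (fun g => g = f) g -> forall m, M_alg br m -> forall q, g (m (f q)) = 0.
  move=> ?; elim=> [g -> | | g h _ hg _ hh | c g _ hg | a g Ma _ hg | g a _ hg Ma
    | g h _ hg e] m Mm q //=.
  - exact: hf.
  - by rewrite hg // hh // addr0.
  - by rewrite hg // scaler0.
  - by rewrite hg // (linm0 (M_lin hb Ma)).
  - exact: (hg (fun z => a (m z)) (ga_comp Ma Mm)).
  - by rewrite -e hg.
have Z : forall g2, gen_ideal (M_alg br) (fun g => g = f) g2 -> forall g1, gen_ideal (M_alg br) (fun g => g = f) g1 -> forall q, g1 (g2 q) = 0.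
  move=> ?; elim=> [g -> | | g h _ hg _ hh | c g _ hg | a g Ma _ hg | g a _ hg Ma
    | g h _ hg e] g1 Gg1 q /=.
  - exact: (T g1 Gg1 id (M_id br)).
  - exact: (linm0 (M_lin hb (GM _ Gg1))).
  - by rewrite (linmD (M_lin hb (GM _ Gg1))) hg // hh // addr0.
  - by rewrite (linmZ (M_lin hb (GM _ Gg1))) hg // scaler0.
  - exact: (hg (fun z => g1 (a z)) (gi_rmul Gg1 Ma)).
  - exact: hg.
  - by rewrite -e hg.
move=> q; case: (eqVneq (f q) 0) => // nz; exfalso.
case: (sp (gen_ideal (M_alg br) (fun g => g = f))) => [||g1 [g2 [G1 G2 nz12]]].
- split.
  + exact: GM.
  + exact: gi_zero.
  + by move=> g h; apply: gi_add.
  + by move=> a g; apply: gi_scale.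
  + by move=> a g Ma Gg; split; [apply: gi_lmul | apply: gi_rmul].
- by exists f; split; [apply: gi_gen | move=> H; move: nz; rewrite H eqxx].
- by apply: nz12 => z; exact: (Z g2 G2 g1 G1 z).
Qed.

Theorem mainTheorem17 (Phi : comPzRingType) (Q : lmodType Phi) (br : Q -> Q -> Q)
  (L : Q -> Prop) :
  is_lie_bracket br -> is_lie_subalgebra br L ->
  dense_ext br L -> mult_semiprime br -> algebra_of_quotients br L ->
  forall I : Q -> Prop, essential_ideal br L I ->
    forall b, l_ann (A_alg br) (tilde br L I) b -> is_zero_map b.
Proof.
move=> hb [[L0 LD LZ] LB] dense [lsp msp] quot I [[IL [I0 ID IZ] IB] ess]
  b [Ab bann].
have Mb := A_sub_M Ab.
have bl := M_lin hb Mb.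
have anti := br_anti hb.
have adl : forall z, linm (ad br z) := fun z => ad_lin z hb.
have r0 : forall z, br z 0 = 0 := fun z => linm0 (adl z).
have rD : forall z x y, br z (x + y) = br z x + br z y :=
  fun z => linmD (adl z).
have rZ : forall z a x, br z (a *: x) = a *: br z x := fun z => linmZ (adl z).
have rN : forall z x, br z (- x) = - br z x := fun z => linmN (adl z).
have Ixl : forall x l, I x -> L l -> I (br x l).
  move=> x l Ix Ll; rewrite anti -scaleN1r; apply: IZ; exact: IB.
pose S (mu : Q -> Q) := forall x, I x -> forall q, b (mu (br x q)) = 0.
have S_id : S id.
  move=> x Ix q; apply: (bann (ad br x)) => //; apply: gi_gen; by exists x.
have C : forall m, M_alg br m -> forall mu, M_alg br mu -> S mu ->
    S (fun z => mu (m z)).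
  move=> ?; elim=> [g [->|[q0 ->]] | | g h Mg hg Mh hh | c g Mg hg | g h Mg hg Mh hh
    | g h Mg hg e] mu Mmu Smu x Ix q /=.
  - exact: Smu.
  - have Mpsi : M_alg br (fun z => b (mu (ad br q0 (ad br x z)))).
      exact: (ga_comp (ga_comp Mb Mmu) (ga_comp (M_ad br q0) (M_ad br x))).
    apply: (dense _ Mpsi) => l Ll; rewrite /ad anti.
    by rewrite (linmN (M_lin hb Mmu)) (linmN bl) Smu ?oppr0 //; apply: Ixl.
  - by rewrite (linm0 (M_lin hb Mmu)) (linm0 bl).
  - by rewrite (linmD (M_lin hb Mmu)) (linmD bl) hg // hh // addr0.
  - by rewrite (linmZ (M_lin hb Mmu)) (linmZ bl) hg // scaler0.
  - exact: (hh (fun z => mu (g z)) (ga_comp Mmu Mg) (hg mu Mmu Smu)).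
  - by rewrite -e; apply: hg.
have P : forall m, M_alg br m -> S m.
  by move=> m Mm; apply: (C m Mm id (M_id br) S_id).
have A1 : forall x, I x -> forall m0, M_alg br m0 -> forall q,
    br x (m0 (b q)) = 0.
  move=> x Ix m0 Mm0.
  have Mf : M_alg br (fun z => ad br x (m0 (b z))).
    exact: (ga_comp (M_ad br x) (ga_comp Mm0 Mb)).
  apply: (sp_zero hb msp Mf) => m Mm q.
  by rewrite /ad (P m Mm x Ix) (linm0 (M_lin hb Mm0)) r0.
pose W z := forall m, M_alg br m -> forall x, I x -> br x (m z) = 0.
apply: (dense _ Mb) => l0 Ll0.
case: (eqVneq (b l0) 0) => // nz; exfalso.
have Ww0 : W (b l0) by move=> m Mm x Ix; apply: A1.
have [J0 [_ _ [j [Jj jnz]] JLq]] := quot _ (elimN eqP nz).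
pose K z := L z /\ W z.
have KI : is_lie_ideal br L K.
  split.
  - by move=> x [].
  - split.
    + split=> // m Mm x Ix; by rewrite (linm0 (M_lin hb Mm)) r0.
    + move=> x y [Lx Wx] [Ly Wy]; split; first exact: LD.
      by move=> m Mm z Iz; rewrite (linmD (M_lin hb Mm)) rD Wx // Wy // addr0.
    + move=> a x [Lx Wx]; split; first exact: LZ.
      by move=> m Mm z Iz; rewrite (linmZ (M_lin hb Mm)) rZ Wx // scaler0.
  - move=> x y Lx [Ly Wy]; split; first exact: LB.
    move=> m Mm z Iz.
    exact: (Wy (fun u => m (ad br x u)) (ga_comp Mm (M_ad br x)) z Iz).
have [|y [Iy [Ly Wy] ynz]] := ess K KI.
  exists (br j (b l0)); split => //; split; first exact: JLq.
  move=> m Mm x Ix.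
  exact: (Ww0 (fun u => m (ad br j u)) (ga_comp Mm (M_ad br j)) x Ix).
have ady : is_zero_map (ad br y).
  apply: (sp_zero hb msp (M_ad br y)) => m Mm q.
  rewrite /ad (anti y q) (linmN (M_lin hb Mm)) rN.
  have := Wy (fun u => m (ad br q u)) (ga_comp Mm (M_ad br q)) y Iy.
  by rewrite /ad => ->; rewrite oppr0.
have [J1 [_ _ [j1 [_ j1nz]] _]] := quot _ ynz.
by apply: j1nz; rewrite anti; have := ady j1; rewrite /ad => ->; rewrite oppr0.
Qed.
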